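(* Let $Q\ge1$, $0<s<Q$, let $(X,d_X,\mu)$ be a proper, locally $Q$-homogeneous metric measure space supporting a local $Q$-Poincaré inequality, and let $\pi\colon X\to W$ be a locally David–Semmes $s$-regular map onto a proper metric space $W$. Let $Y$ be a metric space, $p>Q$, $f\colon X\to Y$ continuous with an upper gradient in $L^p_{\mathrm{loc}}(X)$, and $\alpha\in(s,\frac{ps}{p-Q+s}]$. Then for every compact $K\subseteq X$, the set $$E_\alpha=\{a\in W:\mathcal{H}^\alpha(f(\pi^{-1}(a)\cap K))>0\}$$ is a countable union of compact sets.
   Context: Metric measure space: metric space with Borel measure positive and finite on nonempty open sets; proper: closed balls compact. Locally $Q$-homogeneous: for every compact $K$ there are $R>0$, $C\ge1$ with $\mu(B(x,r_2))/r_2^Q\le C\mu(B(x,r_1))/r_1^Q$ for $x\in K$, $0<r_1\le r_2<R$. Upper gradient of continuous $f$: Borel $g\ge0$ with $d_Y(f(\gamma(0)),f(\gamma(1)))\le\int_\gamma g\,ds$ for all rectifiable $\gamma$. Local $Q$-Poincaré inequality: for each compact $K$ there are $C,\sigma\ge1$, $R>0$ such that for every continuous $u\colon X\to\mathbb{R}$ with upper gradient $g$ and every ball $B$ centered in $K$ of radius $<R$, $\frac{1}{\mu(B)}\int_B|u-u_B|d\mu\le C\operatorname{diam}B(\frac{1}{\mu(\sigma B)}\int_{\sigma B}g^Q d\mu)^{1/Q}$. A surjection $\pi\colon X\to W$ between proper metric spaces is locally David–Semmes $s$-regular if for every compact $K\subseteq X$, $\pi|_K$ is Lipschitz and there are $C\ge1$,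 $r_0>0$ such that for every ball $B\subseteq W$ of radius $r<r_0$, $\pi^{-1}(B)\cap K$ can be covered by at most $Cr^{-s}$ balls in $X$ of radius $Cr$. *)

(* Defs.v *)
From HB Require Import structures.
From mathcomp Require Import all_boot all_order all_algebra.
From mathcomp Require Import all_classical all_reals all_analysis measurable_realfun.
Set Implicit Arguments. Unset Strict Implicit. Unset Printing Implicit Defensive.
Import Order.TTheory GRing.Theory Num.Theory.
Local Open Scope classical_set_scope.
Local Open Scope ring_scope.

Section MetricDefs.
Variable R : realType.

Definition is_metric (T : Type) (d : T -> T -> R) : Prop :=
  [/\ forall x y, 0 <= d x y,
      forall x y, d x y = 0 <-> x = y,
      forall x y, d x y = d y x &
      forall x y z, d x z <= d x y + d y z].

Definition oball (T : Type) (d : T -> T -> R) (x : T) (r : R) : set T :=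
  [set y | d x y < r].
Definition cball (T : Type) (d : T -> T -> R) (x : T) (r : R) : set T :=
  [set y | d x y <= r].

Definition mopen (T : Type) (d : T -> T -> R) (A : set T) : Prop :=
  forall x, A x -> exists2 r : R, 0 < r & oball d x r `<=` A.

Definition mcompact (T : Type) (d : T -> T -> R) (K : set T) : Prop :=
  forall (I : Type) (U : I -> set T), (forall i, mopen d (U i)) ->
    K `<=` \bigcup_i U i ->
    exists2 D : set I, finite_set D & K `<=` \bigcup_(i in D) U i.

Definition proper_metric (T : Type) (d : T -> T -> R) : Prop :=
  is_metric d /\ forall x r, mcompact d (cball d x r).

Definition mcontinuous (T U : Type) (dT : T -> T -> R) (dU : U -> U -> R)
  (f : T -> U) : Prop :=
  forall x (e : R), 0 < e -> exists2 del : R, 0 < del &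
    forall y, dT x y < del -> dU (f x) (f y) < e.

(** Diameter (with the convention diam set0 = 0). *)
Definition mdiam (T : Type) (d : T -> T -> R) (A : set T) : \bar R :=
  ereal_sup ([set 0%E] `|` [set (d x y)%:E | x in A & y in A]).

Definition hausdorff_content (T : Type) (d : T -> T -> R) (a delta : R)
  (A : set T) : \bar R :=
  ereal_inf [set (\sum_(0 <= i <oo) poweR (mdiam d (U i)) a)%E |
              U in [set U : nat -> set T |
                     A `<=` \bigcup_i U i /\ forall i, (mdiam d (U i) <= delta%:E)%E]].

Definition hausdorff_measure (T : Type) (d : T -> T -> R) (a : R) (A : set T)
  : \bar R :=
  ereal_sup [set hausdorff_content d a delta A | delta in [set delta : R | 0 < delta]].

Definition curve_length (T : Type) (d : T -> T -> R) (gamma : R -> T) (a b : R)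
  : \bar R :=
  ereal_sup [set v | exists (n : nat) (t : nat -> R),
      [/\ t 0%N = a, t n = b, (forall i, (i < n)%N -> t i <= t i.+1) &
           v = (\sum_(i < n) (d (gamma (t i)) (gamma (t i.+1)))%:E)%E]].

Definition arclength_curve (T : Type) (d : T -> T -> R) (gamma : R -> T) (l : R)
  : Prop :=
  0 <= l /\ forall a b, 0 <= a -> a <= b -> b <= l ->
    curve_length d gamma a b = (b - a)%:E.

Definition line_integral (T : Type) (gamma : R -> T) (l : R) (g : T -> \bar R)
  : \bar R :=
  (\int[lebesgue_measure]_(t in `[0%R, l]%classic) g (gamma t))%E.

End MetricDefs.

Section MeasDefs.
Variable R : realType.

Definition borel_structure (d0 : measure_display) (X : measurableType d0)
  (dX : X -> X -> R) : Prop :=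
  (@measurable d0 X) = <<s [set A | mopen dX A] >>.

(** Upper gradient (g >= 0 Borel; tested on all rectifiable curves, via their
    arc-length parametrizations, which is how the line integral is defined). *)
Definition upper_gradient (d0 : measure_display) (X : measurableType d0)
  (dX : X -> X -> R) (U : Type) (dU : U -> U -> R) (f : X -> U) (g : X -> \bar R)
  : Prop :=
  [/\ forall x, (0 <= g x)%E, measurable_fun setT g &
      forall (gamma : R -> X) (l : R), arclength_curve dX gamma l ->
        ((dU (f (gamma 0)) (f (gamma l)))%:E <= line_integral gamma l g)%E].

Definition rdist (a b : R) : R := `|a - b|.

Definition ball_mean (d0 : measure_display) (X : measurableType d0)
  (mu : {measure set X -> \bar R}) (B : set X) (h : X -> \bar R) : \bar R :=
  ((fine (mu B))^-1)%:E * (\int[mu]_(x in B) h x)%E.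

Definition locally_homogeneous (d0 : measure_display) (X : measurableType d0)
  (dX : X -> X -> R) (mu : {measure set X -> \bar R}) (Q : R) : Prop :=
  forall K, mcompact dX K -> exists Rr : R, exists C : R,
    [/\ 0 < Rr, 1 <= C &
      forall x r1 r2, K x -> 0 < r1 -> r1 <= r2 -> r2 < Rr ->
        (mu (oball dX x r2) * (powR r2 (- Q))%:E <=
         C%:E * (mu (oball dX x r1) * (powR r1 (- Q))%:E))%E].

Definition local_poincare (d0 : measure_display) (X : measurableType d0)
  (dX : X -> X -> R) (mu : {measure set X -> \bar R}) (Q : R) : Prop :=
  forall K, mcompact dX K -> exists C : R, exists sigma : R, exists Rr : R,
    [/\ 1 <= C, 1 <= sigma, 0 < Rr &
      forall (u : X -> R) (g : X -> \bar R) (x : X) (r : R),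
        mcontinuous dX rdist u -> upper_gradient dX rdist u g ->
        K x -> 0 < r -> r < Rr ->
        let B := oball dX x r in
        let uB := fine (ball_mean mu B (fun y => (u y)%:E)) in
        (ball_mean mu B (fun y => `|u y - uB|%:E) <=
         C%:E * mdiam dX B *
         poweR (ball_mean mu (oball dX x (sigma * r)) (fun y => poweR (g y) Q))
               Q^-1)%E].

Definition Lp_loc (d0 : measure_display) (X : measurableType d0)
  (dX : X -> X -> R) (mu : {measure set X -> \bar R}) (p : R) (g : X -> \bar R)
  : Prop :=
  forall K, mcompact dX K -> (\int[mu]_(x in K) poweR (g x) p < +oo)%E.

Definition locally_DS_regular (X W : Type) (dX : X -> X -> R) (dW : W -> W -> R)
  (pi : X -> W) (s : R) : Prop :=
  (forall w, exists x, pi x = w) /\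
  forall K, mcompact dX K ->
    (exists L : R, forall x y, K x -> K y -> dW (pi x) (pi y) <= L * dX x y) /\
    exists C : R, exists r0 : R, [/\ 1 <= C, 0 < r0 &
      forall (w : W) (r : R), 0 < r -> r < r0 ->
        exists (N : nat) (c : nat -> X),
          (N%:R <= C * powR r (- s)) /\
          pi @^-1` (oball dW w r) `&` K `<=`
            \bigcup_(i in [set i | (i < N)%N]) oball dX (c i) (C * r)].

End MeasDefs.

(* Main.v *)
Require Import Defs.
From HB Require Import structures.
From mathcomp Require Import all_boot all_order all_algebra.
From mathcomp Require Import all_classical all_reals all_analysis measurable_realfun.
From mathcomp Require Import lra.
Import Order.TTheory GRing.Theory Num.Theory.
Local Open Scope classical_set_scope.
Local Open Scope ring_scope.


Section Met.
Variables (R : realType) (T : Type) (d : T -> T -> R).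
Hypothesis hd : is_metric d.

Lemma d_ge0 x y : 0 <= d x y. Proof. by case: hd. Qed.
Lemma d_xx x : d x x = 0. Proof. by case: hd => _ H _ _; exact: (proj2 (H x x) erefl). Qed.
Lemma d_sym x y : d x y = d y x. Proof. by case: hd. Qed.
Lemma d_tri x y z : d x z <= d x y + d y z. Proof. by case: hd. Qed.
Lemma d_eq0 x y : d x y = 0 -> x = y. Proof. by case: hd => _ H _ _; exact: (proj1 (H x y)). Qed.

Lemma oball_open x r : mopen d (oball d x r).
Proof.
move=> y; rewrite /oball /= => hy; exists (r - d x y); first by rewrite subr_gt0.
move=> z; rewrite /oball /= => hz.
have := d_tri x y z; lra.
Qed.

Definition closedm (A : set T) := forall w, ~ A w ->
  exists2 r : R, 0 < r & forall y, d w y < r -> ~ A y.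

Lemma mcompact_closed A : mcompact d A -> closedm A.
Proof.
move=> cA w nAw.
pose U (n : nat) := [set y | (n.+1%:R)^-1 < d w y].
have oU : forall n, mopen d (U n).
  move=> n y; rewrite /U /= => hy; exists (d w y - (n.+1%:R)^-1); first by rewrite subr_gt0.
  move=> z; rewrite /oball /= => hz; have := d_tri w z y; rewrite (d_sym z y); move: hz; set e := (n.+1%:R^-1 : R) => hz; lra.
have cov : A `<=` \bigcup_n U n.
  move=> y Ay; have dp : 0 < d w y.
    rewrite lt_neqAle d_ge0 andbT eq_sym; apply/eqP => /d_eq0 e; by subst y.
  have i0 : 0 <= (d w y)^-1 by rewrite invr_ge0 ltW.
  have hb := Num.Theory.archi_boundP i0.
  exists (Num.Def.archi_bound (d w y)^-1) => //; rewrite /U /=.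
  rewrite -[X in _ < X](invrK (d w y)) ltf_pV2 ?posrE ?invr_gt0 ?ltr0n //.
  by apply: lt_trans hb _; rewrite ltr_nat.
have [D fD hD] := cA _ _ oU cov.
pose N := (\max_(i <- finmap.enum_fset (fset_set D)) i)%N.
exists (N.+1%:R)^-1; first by rewrite invr_gt0 ltr0n.
move=> y hy Ay; have [i Di Ui] := hD _ Ay.
have iN : (i <= N)%N.
  apply: (@leq_bigmax_seq _ _ xpredT id) => //; rewrite in_fset_set //; exact/mem_set.
move: Ui; rewrite /U /=.
have : (N.+1%:R)^-1 <= (i.+1%:R)^-1 :> R.
  by rewrite lef_pV2 ?posrE ?ltr0n // ler_nat.
by move=> h1 h2; have := lt_trans (le_lt_trans h1 h2) hy; rewrite ltxx.
Qed.

Lemma mclosed_sub_compact A B : mcompact d A -> closedm B -> B `<=` A -> mcompact d B.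
Proof.
move=> cA clB BA I U oU cov.
have [[b Bb]|nB] := pselect (exists b, B b); last first.
  by exists set0 => // b Bb; exfalso; apply: nB; exists b.
have [i0 _ Ui0] := cov _ Bb.
pose O := [set w | exists2 r : R, 0 < r & forall y, d w y < r -> ~ B y].
pose V i := U i `|` O.
have oV : forall i, mopen d (V i).
  move=> i y [Uy|[r r0 hr]].
    have [e e0 he] := oU i y Uy; exists e => // z hz; left; exact: he.
  exists r => // z hz; right; exists (r - d y z); first by rewrite subr_gt0.
  move=> t ht; apply: hr; have := d_tri y z t; lra.
have covA : A `<=` \bigcup_i V i.
  move=> a Aa; have [Ba|nBa] := pselect (B a).
    by have [j _ Uj] := cov _ Ba; exists j => //; left.
  by exists i0 => //; right; apply: clB.
have [D fD hD] := cA _ _ oV covA.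
exists D => // b' Bb'; have [j Dj [Uj|[r r0 hr]]] := hD _ (BA _ Bb').
  by exists j.
by exfalso; apply: (hr b') => //; rewrite d_xx.
Qed.
End Met.

Section Img.
Variables (R : realType) (T U : Type) (dT : T -> T -> R) (dU : U -> U -> R).
Hypothesis hT : is_metric dT.

Lemma mcompact_image (A : set T) (phi : T -> U) :
  mcompact dT A ->
  (forall x (e : R), A x -> 0 < e -> exists2 del : R, 0 < del &
     forall y, A y -> dT x y < del -> dU (phi x) (phi y) < e) ->
  mcompact dU (phi @` A).
Proof.
move=> cA cphi I W oW cov.
pose V i := [set x | exists2 r : R, 0 < r & forall y, A y -> dT x y < r -> W i (phi y)].
have oV : forall i, mopen dT (V i).
  move=> i x [r r0 hr]; exists r => // y hy; exists (r - dT x y).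
    by move: hy; rewrite /oball /= subr_gt0.
  move=> z Az hz; apply: hr => //; move: hy; rewrite /oball /= => hy.
  have := @d_tri _ _ _ hT x y z; lra.
have covA : A `<=` \bigcup_i V i.
  move=> x Ax; have [i _ Wi] := cov _ (ex_intro2 _ _ x Ax erefl).
  have [e e0 he] := oW i _ Wi.
  have [del d0 hdel] := cphi x e Ax e0.
  exists i => //; exists del => // y Ay hy; apply: he; exact: hdel.
have [D fD hD] := cA _ _ oV covA.
exists D => // u [x Ax <-]; have [i Di [r r0 hr]] := hD _ Ax.
by exists i => //; apply: hr => //; rewrite (@d_xx _ _ _ hT).
Qed.
End Img.

Section Haus.
Variables (R : realType) (T : Type) (d : T -> T -> R) (alpha : R).
Hypothesis hd : is_metric d.
Hypothesis a0 : 0 < alpha.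

Local Open Scope ereal_scope.

Lemma mdiam_ge0 A : 0 <= mdiam d A.
Proof. by apply: ereal_sup_ubound; left. Qed.

Lemma mdiam_ub A x y : A x -> A y -> (d x y)%:E <= mdiam d A.
Proof. by move=> Ax Ay; apply: ereal_sup_ubound; right; exists x => //; exists y. Qed.

Lemma mdiam_le A (M : R) : (0 <= M)%R -> (forall x y, A x -> A y -> (d x y <= M)%R) ->
  mdiam d A <= M%:E.
Proof.
move=> M0 hM; apply: ge_ereal_sup => _ [->|[x Ax [y Ay <-]]]; first by rewrite lee_fin.
by rewrite lee_fin hM.
Qed.

Lemma mdiam0 : mdiam d set0 = 0.
Proof. by apply/eqP; rewrite eq_le mdiam_ge0 andbT; apply: mdiam_le => // x y []. Qed.

Lemma poweR_le x (y : R) : 0 <= x -> x <= y%:E -> poweR x alpha <= (powR y alpha)%:E.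
Proof.
case: x => [r| |] //; rewrite !lee_fin => r0 ry.
by rewrite ge0_ler_powR // ?ltW // nnegrE (le_trans r0 ry).
Qed.

Lemma poweR_ge x (y : R) : (0 <= y)%R -> y%:E <= x -> (powR y alpha)%:E <= poweR x alpha.
Proof.
case: x => [r| |] // y0; rewrite ?lee_fin => yr.
  by rewrite ge0_ler_powR // ?ltW // nnegrE (le_trans y0 yr).
by rewrite poweRyr ?leey // gt_eqF.
Qed.

Lemma term_le_series (u : nat -> \bar R) i : (forall n, 0 <= u n) ->
  u i <= \sum_(0 <= n <oo) u n.
Proof.
move=> u0; apply: le_trans (nneseries_lim_ge i.+1 (fun n _ _ => u0 n)).
rewrite big_nat_recr //= leeDr //; exact: sume_ge0.
Qed.

Notation H1 := (hausdorff_content d alpha 1).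

Lemma content_ge0 delta A : 0 <= hausdorff_content d alpha delta A.
Proof.
apply: le_ereal_inf_tmp => _ [U _ <-]; apply: nneseries_ge0 => n _ _; exact: poweR_ge0.
Qed.

Lemma content_le delta A (U : nat -> set T) : A `<=` \bigcup_i U i ->
  (forall i, mdiam d (U i) <= delta%:E) ->
  hausdorff_content d alpha delta A <= \sum_(0 <= i <oo) poweR (mdiam d (U i)) alpha.
Proof. by move=> AU hU; apply: ereal_inf_lbound; exists U. Qed.

Lemma content_set0 delta : (0 <= delta)%R -> hausdorff_content d alpha delta set0 = 0.
Proof.
move=> d0; apply/eqP; rewrite eq_le content_ge0 andbT.
apply: le_trans (@content_le delta set0 (fun _ => set0) _ _) _ => //.
  by move=> i; rewrite mdiam0 lee_fin.
by rewrite eseries0 // => i _ _; rewrite mdiam0 poweR0r // gt_eqF.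
Qed.

Lemma pos_iff A : 0 < hausdorff_measure d alpha A <-> 0 < H1 A.
Proof.
split; last first.
  move=> h; apply: lt_le_trans h _; apply: ereal_sup_ubound; exists 1%R => //=.
apply: contraPP => /negP; rewrite -leNgt => h1; apply/negP; rewrite -leNgt.
apply: ge_ereal_sup => _ [del /= del0 <-].
apply/lee_addgt0Pr => e e0; rewrite add0e.
pose t := Num.min e (powR del alpha).
have t0 : (0 < t)%R by rewrite lt_min e0 powR_gt0.
have : H1 A < t%:E by apply: le_lt_trans h1 _; rewrite lte_fin.
move=> /ereal_inf_lt [_ [U [AU Ud] <-]] hlt.
have u0 : forall n, 0 <= poweR (mdiam d (U n)) alpha by move=> n; exact: poweR_ge0.
have Udel : forall i, mdiam d (U i) <= del%:E.
  move=> i; rewrite leNgt; apply/negP => hi.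
  have := @poweR_ge _ del (ltW del0) (ltW hi).
  have := @term_le_series _ i u0.
  move=> h2 h3; have := le_lt_trans (le_trans h3 h2) hlt.
  by rewrite lte_fin lt_min ltxx andbF.
apply: le_trans (@content_le del A U AU Udel) _; apply: ltW; apply: lt_le_trans hlt _.
by rewrite lee_fin ge_min lexx.
Qed.


Lemma enlarge A (c : R) : (0 < c)%R -> (c <= 1)%R -> H1 A < c%:E ->
  exists O : set T, [/\ mopen d O, A `<=` O & forall B, B `<=` O -> H1 B < c%:E].
Proof.
move=> c0 c1 /ereal_inf_lt [_ [U [AU Ud] <-]] hS.
pose a i := poweR (mdiam d (U i)) alpha.
have ai0 : forall i, 0 <= a i by move=> i; exact: poweR_ge0.
have S0 : 0 <= \sum_(0 <= i <oo) a i by apply: nneseries_ge0 => n _ _; exact: ai0.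
have Sfin : \sum_(0 <= i <oo) a i \is a fin_num.
  by rewrite ge0_fin_numE // (lt_trans hS (ltry _)).
set S := \sum_(0 <= i <oo) a i in S0 Sfin hS.
pose s := fine S.
have Se : S = s%:E by rewrite fineK.
have s0 : (0 <= s)%R by rewrite -lee_fin -Se.
have sc : (s < c)%R by rewrite -lte_fin -Se.
have Ult : forall i, mdiam d (U i) < 1%:E.
  move=> i; rewrite ltNge; apply/negP => h.
  have := @poweR_ge _ 1%R ler01 h; rewrite powR1 => h2.
  have := le_lt_trans (le_trans h2 (@term_le_series a i ai0)) hS.
  by rewrite lte_fin; lra.
pose dd i := fine (mdiam d (U i)).
have dde : forall i, mdiam d (U i) = (dd i)%:E.
  move=> i; rewrite fineK // ge0_fin_numE ?mdiam_ge0 //; exact: lt_trans (Ult i) (ltry _).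
have dd0 : forall i, (0 <= dd i)%R by move=> i; rewrite -lee_fin -dde mdiam_ge0.
have dd1 : forall i, (dd i < 1)%R by move=> i; rewrite -lte_fin -dde.
have ae : forall i, a i = (powR (dd i) alpha)%:E by move=> i; rewrite /a dde poweR_EFin.
pose beta := ((c - s) / 4)%R.
have b0 : (0 < beta)%R by rewrite /beta; lra.
pose mu := ((s + 2 * beta) / (s + beta))%R.
have sb0 : (0 < s + beta)%R by lra.
have mu1 : (1 < mu)%R by rewrite /mu ltr_pdivlMr //; lra.
have mu0 : (0 <= mu)%R by lra.
have muE : (mu * (s + beta) = s + 2 * beta)%R by rewrite /mu mulfVK // gt_eqF.
pose lam := powR mu alpha^-1.
have lamE : powR lam alpha = mu.
  by rewrite /lam -powRrM mulVf ?gt_eqF // powRr1.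
have lam1 : (1 < lam)%R.
  rewrite ltNge; apply/negP => h.
  have := @ge0_ler_powR _ alpha (ltW a0) lam 1%R (powR_ge0 _ _) ler01 h.
  by rewrite lamE powR1; lra.
pose e (i : nat) := (beta / (2 ^ i.+1)%:R)%R.
have e0 : forall i, (0 < e i)%R by move=> i; rewrite /e divr_gt0 // ltr0n expn_gt0.
pose r i := powR (e i) alpha^-1.
have r0 : forall i, (0 < r i)%R by move=> i; rewrite powR_gt0.
have rE : forall i, powR (r i) alpha = e i.
  by move=> i; rewrite /r -powRrM mulVf ?gt_eqF // powRr1 // ltW.
pose m i := Num.max (dd i) (r i).
have m0 : forall i, (0 < m i)%R by move=> i; rewrite lt_max r0 orbT.
have mdd : forall i, (dd i <= m i)%R by move=> i; rewrite le_max lexx.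
have lmm : forall i, (m i < lam * m i)%R.
  by move=> i; rewrite -{1}(mul1r (m i)) ltr_pM2r.
pose eta i := Num.min ((lam * m i - dd i) / 2)%R ((1 - dd i) / 2)%R.
have eta0 : forall i, (0 < eta i)%R.
  move=> i; rewrite lt_min; apply/andP; split.
    by have := lmm i; have := mdd i; lra.
  by have := dd1 i; lra.
have eta1 : forall i, (dd i + 2 * eta i <= 1)%R.
  move=> i; suff : (eta i <= (1 - dd i) / 2)%R by lra.
  by rewrite /eta ge_min lexx orbT.
have eta2 : forall i, (dd i + 2 * eta i <= lam * m i)%R.
  move=> i; suff : (eta i <= (lam * m i - dd i) / 2)%R by lra.
  by rewrite /eta ge_min lexx.
pose V i := [set y | exists2 u, U i u & (d u y < eta i)%R].
exists (\bigcup_i V i); split.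
- move=> y [i _ [u Uu hu]]; exists (eta i - d u y)%R; first by rewrite subr_gt0.
  move=> z; rewrite /oball /= => hz; exists i => //; exists u => //.
  by have := @d_tri _ _ _ hd u y z; lra.
- move=> x Ax; have [i _ Ui] := AU _ Ax; exists i => //; exists x => //.
  by rewrite (@d_xx _ _ _ hd).
move=> B BO.
have dV : forall i, mdiam d (V i) <= (dd i + 2 * eta i)%:E.
  move=> i; apply: mdiam_le; first by have := dd0 i; have := eta0 i; lra.
  move=> y y' [u Uu hu] [u' Uu' hu'].
  have h1 := @d_tri _ _ _ hd y u y'; have h2 := @d_tri _ _ _ hd u u' y'.
  have h3 : (d u u' <= dd i)%R by rewrite -lee_fin -dde mdiam_ub.
  rewrite (@d_sym _ _ _ hd y u) in h1; lra.
have pV : forall i, poweR (mdiam d (V i)) alpha <= (mu%:E * (a i + (e i)%:E)).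
  move=> i; apply: le_trans (@poweR_le _ _ (mdiam_ge0 _) (dV i)) _.
  rewrite ae -EFinD -EFinM lee_fin.
  apply: le_trans (ge0_ler_powR (ltW a0) _ _ (eta2 i)) _.
  - by rewrite nnegrE; have := dd0 i; have := eta0 i; lra.
  - by rewrite nnegrE mulr_ge0 // ?ltW // (lt_trans _ lam1).
  have lam0 : (0 <= lam)%R by rewrite /lam powR_ge0.
  rewrite (powRM _ lam0 (ltW (m0 i))) lamE ler_pM2l; last by lra.
  rewrite /m; case: (leP (dd i) (r i)) => _.
    by rewrite rE lerDr powR_ge0.
  by rewrite lerDl ltW.
have sV : forall i, mdiam d (V i) <= 1%:E.
  by move=> i; apply: le_trans (dV i) _; rewrite lee_fin.
apply: le_lt_trans (@content_le 1%R B V _ sV) _.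
  by move=> y /BO.
apply: le_lt_trans (lee_nneseries _ (fun n _ => pV n)) _.
  by move=> n _ _; exact: poweR_ge0.
rewrite nneseriesZl; last by move=> n _; rewrite adde_ge0 // lee_fin ltW.
apply: le_lt_trans (lee_wpmul2l _ (epsilon_trick xpredT ai0 (ltW b0))) _.
  by rewrite lee_fin.
rewrite -/S Se -EFinD -EFinM muE lte_fin. rewrite /beta; lra.
Qed.

End Haus.

Lemma lip_cont (R : realType) (T U : Type) (dT : T -> T -> R) (dU : U -> U -> R)
  (hT : is_metric dT) (K A : set T) (phi : T -> U) (L : R) :
  A `<=` K -> (forall x y, K x -> K y -> dU (phi x) (phi y) <= L * dT x y) ->
  forall x (e : R), A x -> 0 < e -> exists2 del : R, 0 < del &
     forall y, A y -> dT x y < del -> dU (phi x) (phi y) < e.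
Proof.
move=> AK hL x e Ax e0; pose L' := Num.max L 1.
have L'0 : 0 < L' by rewrite lt_max ltr01 orbT.
exists (e / L'); first by rewrite divr_gt0.
move=> y Ay hy; apply: le_lt_trans (hL _ _ (AK _ Ax) (AK _ Ay)) _.
apply: le_lt_trans (_ : L * dT x y <= L' * dT x y) _.
  by rewrite ler_wpM2r ?(@d_ge0 _ _ _ hT) // le_max lexx.
by rewrite mulrC -ltr_pdivlMr.
Qed.

Theorem lemma5p1 (R : realType) (Q s p alpha : R)
  (d0 : measure_display) (X : measurableType d0) (dX : X -> X -> R)
  (mu : {measure set X -> \bar R})
  (W : Type) (dW : W -> W -> R) (pi : X -> W)
  (Y : Type) (dY : Y -> Y -> R) (f : X -> Y) (g : X -> \bar R) :
  1 <= Q -> 0 < s -> s < Q ->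
  proper_metric dX -> borel_structure dX ->
  (forall A, mopen dX A -> A !=set0 -> (0 < mu A)%E) ->
  (forall x r, (mu (oball dX x r) < +oo)%E) ->
  locally_homogeneous dX mu Q -> local_poincare dX mu Q ->
  proper_metric dW -> locally_DS_regular dX dW pi s ->
  is_metric dY -> Q < p ->
  mcontinuous dX dY f -> upper_gradient dX dY f g -> Lp_loc dX mu p g ->
  s < alpha -> alpha <= p * s / (p - Q + s) ->
  forall K, mcompact dX K ->
    exists C : nat -> set W, (forall n, mcompact dW (C n)) /\
      [set a | (0 < hausdorff_measure dY alpha (f @` (pi @^-1` [set a] `&` K)))%E]
        = \bigcup_n C n.
Proof.
move=> _ s0 _ [mX _] _ _ _ _ _ [mW _] [_ ds] mY _ fc _ _ sa _ K cK.
have a0 : 0 < alpha by apply: lt_trans sa.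
have [[L hL] _] := ds K cK.
pose F a := f @` (pi @^-1` [set a] `&` K).
pose H1 := hausdorff_content dY alpha 1.
pose C (n : nat) := [set a | ((n.+1%:R)^-1)%:E <= H1 (F a)]%E.
have cpiK : mcompact dW (pi @` K).
  apply: (@mcompact_image _ _ _ _ dW mX K pi cK); exact: (@lip_cont _ _ _ _ _ mX K K pi L (fun x h => h) hL).
exists C; split; last first.
  apply/seteqP; split => a /=.
    move=> /(@pos_iff _ _ dY alpha a0) h; have {h} h : (0 < H1 (F a))%E := h.
    case E : (H1 (F a)) => [r| |].
    - have r0 : 0 < r by rewrite -lte_fin -E.
      have i0 : 0 <= r^-1 by rewrite invr_ge0 ltW.
      have hb := Num.Theory.archi_boundP i0.
      exists (Num.Def.archi_bound r^-1) => //; rewrite /C /= E lee_fin.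
      rewrite -[X in _ <= X](invrK r) lef_pV2 ?posrE ?invr_gt0 ?ltr0n //.
      by apply: ltW; apply: lt_trans hb _; rewrite ltr_nat.
    - by exists 0%N => //; rewrite /C /= E leey.
    - by move: h; rewrite E.
  move=> [n _]; rewrite /C /= => h; apply/(@pos_iff _ _ dY alpha a0).
  by apply: lt_le_trans h; rewrite lte_fin invr_gt0 ltr0n.
move=> n; set c : R := (n.+1%:R)^-1.
have c0 : 0 < c by rewrite invr_gt0 ltr0n.
have c1 : c <= 1 by rewrite /c invf_le1 ?ltr0n // ler1n.
apply: (@mclosed_sub_compact _ _ _ mW (pi @` K) (C n) cpiK).
- move=> w; rewrite /C /= => /negP; rewrite -ltNge => hw.
  have [Op [oO FO hO]] := @enlarge _ _ dY alpha mY a0 (F w) c c0 c1 hw.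
  pose G := [set x | K x /\ ~ Op (f x)].
  have clG : @closedm _ _ dX G.
    move=> x nGx; have [Kx|nKx] := pselect (K x).
      have Ofx : Op (f x) by apply: contrapT => h; apply: nGx.
      have [eps eps0 heps] := oO _ Ofx.
      have [del del0 hdel] := fc x eps eps0.
      by exists del => // y /hdel hy [_]; apply; apply: heps.
    have [r r0 hr] := @mcompact_closed _ _ _ mX K cK x nKx.
    by exists r => // y /hr hy [].
  have cG : mcompact dX G by apply: (@mclosed_sub_compact _ _ _ mX K G cK clG) => x [].
  have cpiG : mcompact dW (pi @` G).
    apply: (@mcompact_image _ _ _ _ dW mX G pi cG); apply: (@lip_cont _ _ _ _ _ mX K G pi L _ hL).
    by move=> x [].
  have nw : ~ (pi @` G) w.
    move=> [x [Kx nO] pw]; apply: nO; apply: FO; exists x => //.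
  have [r r0 hr] := @mcompact_closed _ _ _ mW _ cpiG w nw.
  exists r => // y /hr hy; rewrite /C /=; apply/negP; rewrite -ltNge; apply: hO.
  move=> _ [x [pxy Kx] <-]; apply: contrapT => nO; apply: hy.
  by exists x.
- move=> a; rewrite /C /= => ha; apply: contrapT => na.
  have F0 : F a = set0.
    apply/seteqP; split => // y [x [pxa Kx] _]; apply: na; by exists x.
  move: ha; rewrite F0 /H1 content_set0 // lee_fin leNgt.
  by move/negP; apply.
Qed.
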